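(* Let $(\mathcal P,\cdot,[-,\dots,-])$ be a Poisson $n$-Lie algebra and let $\widetilde{\mathcal P}=\otimes^{n-1}\mathcal P$ be equipped with the componentwise product $(x_1\otimes\cdots\otimes x_{n-1})\cdot(y_1\otimes\cdots\otimes y_{n-1})=x_1y_1\otimes\cdots\otimes x_{n-1}y_{n-1}$ and with the bilinear bracket defined on pure tensors $x=x_1\otimes\cdots\otimes x_{n-1}$, $y=y_1\otimes\cdots\otimes y_{n-1}$ by $$[x,y]_\otimes=\sum_{i=1}^{n-1}y_1\otimes\cdots\otimes[x_1,\dots,x_{n-1},y_i]\otimes\cdots\otimes y_{n-1}.$$ Let $\mathcal J$ be the ideal of $\widetilde{\mathcal P}$ with respect to both operations $\cdot$ and $[-,-]_\otimes$ generated by all elements $[x,y]_\otimes+[y,x]_\otimes$, $x,y\in\otimes^{n-1}\mathcal P$. Then $(\widetilde{\mathcal P}/\mathcal J,\cdot,[-,-]_\otimes)$ with the induced operations is a Poisson algebra.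
   Context: A Poisson $n$-Lie algebra is a commutative associative algebra $(\mathcal P,\cdot)$ with an $n$-linear skew-symmetric bracket satisfying the fundamental identity $[x_1,\dots,x_{n-1},[y_1,\dots,y_n]]=\sum_{i=1}^n[y_1,\dots,[x_1,\dots,x_{n-1},y_i],\dots,y_n]$ and the Leibniz rule $[y\cdot z,x_2,\dots,x_n]=y\cdot[z,x_2,\dots,x_n]+z\cdot[y,x_2,\dots,x_n]$. A Poisson algebra is a commutative associative algebra with a Lie bracket $[-,-]$ satisfying $[x,y\cdot z]=[x,y]\cdot z+y\cdot[x,z]$. *)

(* Defs.v *)
From HB Require Import structures.
From mathcomp Require Import all_boot all_order all_algebra all_fingroup.
Set Implicit Arguments. Unset Strict Implicit. Unset Printing Implicit Defensive.
Import GRing.Theory.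
Local Open Scope ring_scope.

Definition upd (I : eqType) (T : Type) (f : I -> T) (i : I) (v : T) : I -> T :=
  fun j => if j == i then v else f j.

(* (x_1,...,x_m, y) as a family indexed by 'I_m.+1, y in the last slot *)
Definition extend (T : Type) (m : nat) (x : 'I_m -> T) (y : T) : 'I_m.+1 -> T :=
  fun i => match unlift ord_max i with Some j => x j | None => y end.

Section Defs.
Variable K : fieldType.

Definition linear_map (U W : lmodType K) (g : U -> W) : Prop :=
  forall (a : K) (u v : U), g (a *: u + v) = a *: g u + g v.

Definition multilinear (P W : lmodType K) (k : nat) (f : ('I_k -> P) -> W) : Prop :=
  forall (y : 'I_k -> P) (i : 'I_k) (a : K) (u v : P),
    f (upd y i (a *: u + v)) = a *: f (upd y i u) + f (upd y i v).

Definition bilinear_op (U : lmodType K) (op : U -> U -> U) : Prop :=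
  (forall b, linear_map (fun a => op a b)) /\ (forall a, linear_map (op a)).

Definition comm_assoc_alg (P : lmodType K) (mul : P -> P -> P) : Prop :=
  bilinear_op mul /\ (forall a b, mul a b = mul b a)
  /\ (forall a b c, mul (mul a b) c = mul a (mul b c)).

(* Poisson n-Lie algebra with n = m.+1, bracket br : P^n -> P *)
Definition poisson_nlie (m : nat) (P : lmodType K) (mul : P -> P -> P)
    (br : ('I_m.+1 -> P) -> P) : Prop :=
  comm_assoc_alg mul
  /\ multilinear br
  /\ (forall (y : 'I_m.+1 -> P) (i j : 'I_m.+1), i != j ->
        br (fun k => y (tperm i j k)) = - br y)
  /\ (forall (x : 'I_m -> P) (y : 'I_m.+1 -> P),
        br (extend x (br y)) =
        \sum_(i < m.+1) br (upd y i (br (extend x (y i)))))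
  /\ (forall (x : 'I_m.+1 -> P) (y z : P),
        br (upd x ord0 (mul y z)) =
        mul y (br (upd x ord0 z)) + mul z (br (upd x ord0 y))).

Definition is_tensor_power (m : nat) (P T : lmodType K)
    (iota : ('I_m -> P) -> T) : Prop :=
  multilinear iota /\
  forall (W : lmodType K) (f : ('I_m -> P) -> W), multilinear f ->
    (exists g : T -> W, linear_map g /\ forall x, g (iota x) = f x) /\
    (forall g1 g2 : T -> W, linear_map g1 -> linear_map g2 ->
       (forall x, g1 (iota x) = f x) -> (forall x, g2 (iota x) = f x) ->
       forall t, g1 t = g2 t).

Definition is_ideal2 (T : lmodType K) (mulT brT : T -> T -> T) (I : T -> Prop) :=
  I 0 /\ (forall (a : K) u v, I u -> I v -> I (a *: u + v))
  /\ (forall t a, I a -> I (mulT t a) /\ I (mulT a t) /\ I (brT t a) /\ I (brT a t)).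

Definition gen_ideal2 (T : lmodType K) (mulT brT : T -> T -> T) (S : T -> Prop)
    : T -> Prop :=
  fun t => forall I, is_ideal2 mulT brT I -> (forall s, S s -> I s) -> I t.

(* The quotient T/J with induced operations is a Poisson algebra:
   J is an ideal for both operations (so the induced operations are
   well-defined and bilinear), and the Poisson algebra axioms hold
   modulo J, i.e. in T/J. *)
Definition poisson_quotient (T : lmodType K) (mulT brT : T -> T -> T)
    (J : T -> Prop) : Prop :=
  bilinear_op mulT /\ bilinear_op brT /\ is_ideal2 mulT brT J
  /\ (forall a b, J (mulT a b - mulT b a))
  /\ (forall a b c, J (mulT (mulT a b) c - mulT a (mulT b c)))
  /\ (forall a b, J (brT a b + brT b a))
  /\ (forall a b c, J (brT a (brT b c) + brT b (brT c a) + brT c (brT a b)))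
  /\ (forall a b c, J (brT a (mulT b c) - (mulT (brT a b) c + mulT b (brT a c)))).

End Defs.

(* Main.v *)
Require Import Defs.
From HB Require Import structures.
From mathcomp Require Import all_boot all_order all_algebra all_fingroup.
From Stdlib Require Import FunctionalExtensionality.
Set Implicit Arguments. Unset Strict Implicit.
Import GRing.Theory.
Local Open Scope ring_scope.

Lemma lin0 (K : fieldType) (U W : lmodType K) (g : U -> W) :
  linear_map g -> g 0 = 0.
Proof. move=> hg; have h := hg 1 0 0; rewrite !scale1r addr0 in h.
by apply: (addrI (g 0)); rewrite addr0 -h. Qed.

Lemma linD (K : fieldType) (U W : lmodType K) (g : U -> W) :
  linear_map g -> forall u v, g (u + v) = g u + g v.
Proof. by move=> hg u v; have := hg 1 u v; rewrite !scale1r. Qed.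

Lemma linN (K : fieldType) (U W : lmodType K) (g : U -> W) :
  linear_map g -> forall u, g (- u) = - g u.
Proof. move=> hg u; have := hg (-1) u 0; rewrite addr0 (lin0 hg) addr0.
by rewrite !scaleN1r. Qed.

Lemma lin_sum (K : fieldType) (U W : lmodType K) (g : U -> W) (I : Type)
  (r : seq I) (Pr : pred I) (F : I -> U) :
  linear_map g -> g (\sum_(i <- r | Pr i) F i) = \sum_(i <- r | Pr i) g (F i).
Proof. move=> hg; apply: (big_morph g (linD hg) (lin0 hg)). Qed.

Lemma lin_comp (K : fieldType) (U V W : lmodType K) (g : V -> W) (h : U -> V) :
  linear_map g -> linear_map h -> linear_map (fun t => g (h t)).
Proof. by move=> hg hh a u v; rewrite hh hg. Qed.

Lemma lin_add (K : fieldType) (U W : lmodType K) (g h : U -> W) :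
  linear_map g -> linear_map h -> linear_map (fun t => g t + h t).
Proof. move=> hg hh a u v; rewrite hg hh scalerDr.
by rewrite -!addrA; congr (_ + _); rewrite addrCA. Qed.

Lemma ml0 (K : fieldType) (P W : lmodType K) (k : nat) (f : ('I_k -> P) -> W) :
  multilinear f -> forall y i, f (upd y i 0) = 0.
Proof. move=> hf y i; exact: (lin0 (g := fun v => f (upd y i v)) (fun a u v => hf y i a u v)). Qed.

Lemma mlD (K : fieldType) (P W : lmodType K) (k : nat) (f : ('I_k -> P) -> W) :
  multilinear f -> forall y i u v, f (upd y i (u + v)) = f (upd y i u) + f (upd y i v).
Proof. move=> hf y i; exact: (linD (g := fun v => f (upd y i v)) (fun a u v => hf y i a u v)). Qed.

Lemma ml_sum (K : fieldType) (P W : lmodType K) (k : nat) (f : ('I_k -> P) -> W)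
  y i (I : Type) (r : seq I) (Pr : pred I) (F : I -> P) :
  multilinear f -> f (upd y i (\sum_(j <- r | Pr j) F j)) = \sum_(j <- r | Pr j) f (upd y i (F j)).
Proof. move=> hf; exact: (lin_sum _ _ _ (g := fun v => f (upd y i v)) (fun a u v => hf y i a u v)). Qed.

Lemma upd_same (I : eqType) T (f : I -> T) i v : upd f i v i = v.
Proof. by rewrite /upd eqxx. Qed.
Lemma upd_other (I : eqType) T (f : I -> T) i j v : j != i -> upd f i v j = f j.
Proof. by rewrite /upd => /negPf ->. Qed.
Lemma upd_upd (I : eqType) T (f : I -> T) i v w : upd (upd f i v) i w = upd f i w.
Proof. apply: functional_extensionality => j; rewrite /upd; by case: (j == i). Qed.
Lemma upd_comm (I : eqType) T (f : I -> T) i j v w : i != j ->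
  upd (upd f i v) j w = upd (upd f j w) i v.
Proof. move=> hij; apply: functional_extensionality => k; rewrite /upd.
case: (eqVneq k j) => [->|]; last by [].
by rewrite eq_sym (negPf hij). Qed.
Lemma upd_id (I : eqType) T (f : I -> T) i : upd f i (f i) = f.
Proof. apply: functional_extensionality => k; rewrite /upd; by case: eqP => [->|]. Qed.

Lemma widen_lift m (j : 'I_m) : widen_ord (leqnSn m) j = lift ord_max j.
Proof. by apply: val_inj; rewrite /= /bump leqNgt ltn_ord. Qed.

Lemma extend_max T m (x : 'I_m -> T) y : extend x y ord_max = y.
Proof. by rewrite /extend unlift_none. Qed.
Lemma extend_lift T m (x : 'I_m -> T) y j : extend x y (widen_ord (leqnSn m) j) = x j.
Proof. by rewrite /extend widen_lift liftK. Qed.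
Lemma upd_extend_max T m (x : 'I_m -> T) y v : upd (extend x y) ord_max v = extend x v.
Proof. apply: functional_extensionality => k; rewrite /upd /extend.
by case: unliftP => [j ->|->]; rewrite ?eqxx // eq_sym eq_liftF. Qed.
Lemma upd_extend_lift T m (x : 'I_m -> T) y j v :
  upd (extend x y) (widen_ord (leqnSn m) j) v = extend (upd x j v) y.
Proof. apply: functional_extensionality => k; rewrite /upd /extend widen_lift.
case: unliftP => [j' ->|->]; first by rewrite (inj_eq (@lift_inj _ _)).
by rewrite eq_liftF. Qed.

Lemma FI2 (K : fieldType) (m : nat) (P : lmodType K) (mul : P -> P -> P)
  (br : ('I_m.+1 -> P) -> P) (hP : poisson_nlie mul br) x y w :
  br (extend x (br (extend y w))) =
  \sum_(j < m) br (extend (upd y j (br (extend x (y j)))) w)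
  + br (extend y (br (extend x w))).
Proof.
have [_ [_ [_ [hfi _]]]] := hP.
rewrite hfi big_ord_recr /= upd_extend_max extend_max; congr (_ + _).
by apply: eq_bigr => j _; rewrite extend_lift upd_extend_lift.
Qed.

Lemma Dmul (K : fieldType) (m : nat) (hm : (0 < m)%N) (P : lmodType K) (mul : P -> P -> P)
  (br : ('I_m.+1 -> P) -> P) (hP : poisson_nlie mul br) x y z :
  br (extend x (mul y z)) = mul y (br (extend x z)) + mul z (br (extend x y)).
Proof.
have [[[hml hmr] _] [_ [hsk [_ hlb]]]] := hP.
have n0m : (ord0 : 'I_m.+1) != ord_max.
  by apply/eqP => /(congr1 val) /= h; move: hm; rewrite -h.
set Z := fun v => fun k => extend x v (tperm ord0 ord_max k).
have sk v : br (extend x v) = - br (Z v).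
  by rewrite /Z (hsk (extend x v) _ _ n0m) opprK.
have indep a b (t : 'I_m.+1) : t != ord_max -> extend x a t = extend x b t.
  by rewrite /extend; case: unliftP => [j _|->]; rewrite ?eqxx.
have hZ a b : upd (Z a) ord0 b = Z b.
  apply: functional_extensionality => k; rewrite /upd /Z.
  case: (eqVneq k ord0) => [->|hk]; first by rewrite tpermL extend_max.
  apply: indep; case: (eqVneq k ord_max) => [->|hk2]; first by rewrite tpermR.
  by rewrite tpermD // eq_sym.
rewrite !sk -(hZ 0 (mul y z)) hlb !hZ opprD.
by rewrite -!(linN (hmr _)).
Qed.

Lemma ext1 (K : fieldType) (m : nat) (P T : lmodType K) (iota : ('I_m -> P) -> T)
  (hT : is_tensor_power iota) (W : lmodType K) (g1 g2 : T -> W) :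
  linear_map g1 -> linear_map g2 -> (forall x, g1 (iota x) = g2 (iota x)) ->
  forall t, g1 t = g2 t.
Proof.
move=> h1 h2 he; have [hi hu] := hT.
have mf : multilinear (fun x => g1 (iota x)) by move=> y i a u v; rewrite hi h1.
have [_ hun] := hu W _ mf; exact: (hun g1 g2 h1 h2).
Qed.

Lemma ext2 (K : fieldType) (m : nat) (P T : lmodType K) (iota : ('I_m -> P) -> T)
  (hT : is_tensor_power iota) (W : lmodType K) (F G : T -> T -> W) :
  (forall a, linear_map (F a)) -> (forall b, linear_map (fun a => F a b)) ->
  (forall a, linear_map (G a)) -> (forall b, linear_map (fun a => G a b)) ->
  (forall x y, F (iota x) (iota y) = G (iota x) (iota y)) ->
  forall a b, F a b = G a b.
Proof.
move=> F1 F2 G1 G2 he.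
have s1 x b : F (iota x) b = G (iota x) b by apply: (ext1 hT) => // y.
move=> a b; apply: (ext1 hT (g1 := fun a => F a b) (g2 := fun a => G a b)) => // x.
Qed.

Lemma ext3 (K : fieldType) (m : nat) (P T : lmodType K) (iota : ('I_m -> P) -> T)
  (hT : is_tensor_power iota) (W : lmodType K) (F G : T -> T -> T -> W) :
  (forall a b, linear_map (F a b)) -> (forall a c, linear_map (fun b => F a b c)) ->
  (forall b c, linear_map (fun a => F a b c)) ->
  (forall a b, linear_map (G a b)) -> (forall a c, linear_map (fun b => G a b c)) ->
  (forall b c, linear_map (fun a => G a b c)) ->
  (forall x y z, F (iota x) (iota y) (iota z) = G (iota x) (iota y) (iota z)) ->
  forall a b c, F a b c = G a b c.
Proof.
move=> F1 F2 F3 G1 G2 G3 he.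
have s1 x y c : F (iota x) (iota y) c = G (iota x) (iota y) c by apply: (ext1 hT) => // z.
have s2 x b c : F (iota x) b c = G (iota x) b c.
  by apply: (ext1 hT (g1 := fun b => F (iota x) b c) (g2 := fun b => G (iota x) b c)).
move=> a b c; by apply: (ext1 hT (g1 := fun a => F a b c) (g2 := fun a => G a b c)).
Qed.
Unset Implicit Arguments.

Theorem proposition4p5 (K : fieldType) (m : nat) (hm : (0 < m)%N)
  (P : lmodType K) (mul : P -> P -> P) (br : ('I_m.+1 -> P) -> P)
  (hP : poisson_nlie mul br)
  (T : lmodType K) (iota : ('I_m -> P) -> T) (hT : is_tensor_power iota)
  (mulT brT : T -> T -> T)
  (hmulT : bilinear_op mulT) (hbrT : bilinear_op brT)
  (hmul_iota : forall x y : 'I_m -> P,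
      mulT (iota x) (iota y) = iota (fun i => mul (x i) (y i)))
  (hbr_iota : forall x y : 'I_m -> P,
      brT (iota x) (iota y) =
      \sum_(i < m) iota (upd y i (br (extend x (y i))))) :
  poisson_quotient mulT brT
    (gen_ideal2 mulT brT (fun s => exists a b, s = brT a b + brT b a)).
Proof.
have [[[hml hmr] [hmulC hmulA]] [_ [_ [_ hlb]]]] := hP.
have [hbl hbr] := hbrT; have [hTl hTr] := hmulT.
have [hi _] := hT.
set J := gen_ideal2 _ _ _.
have hJ : is_ideal2 mulT brT J.
  split; first by move=> I [h0 _] _.
  split; first by move=> a u v Ju Jv I hI hS; have [_ [hc _]] := hI; apply: hc; [apply: Ju|apply: Jv].
  move=> t a Ja.
  split; [|split; [|split]] => I hI hS; have [_ [_ hid]] := hI; have := hid t a (Ja I hI hS); tauto.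
have [J0 [Jc Jid]] := hJ.
have Jadd u v : J u -> J v -> J (u + v) by move=> Ju Jv; have := Jc 1 u v Ju Jv; rewrite scale1r.
have Jgen a b : J (brT a b + brT b a) by move=> I hI hS; apply: hS; exists a, b.
have brsumR x (f : 'I_m -> 'I_m -> P) :
  brT (iota x) (\sum_(j < m) iota (f j)) =
  \sum_(j < m) \sum_(i < m) iota (upd (f j) i (br (extend x (f j i)))).
  by rewrite (lin_sum _ _ _ (hbr (iota x))); apply: eq_bigr => j _; exact: hbr_iota.
have brsumL z (f : 'I_m -> 'I_m -> P) :
  brT (\sum_(i < m) iota (f i)) (iota z) =
  \sum_(i < m) \sum_(j < m) iota (upd z j (br (extend (f i) (z j)))).
  by rewrite (lin_sum _ _ _ (hbl (iota z))); apply: eq_bigr => j _; exact: hbr_iota.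
have comm a b : mulT a b = mulT b a.
  apply: (ext2 hT (F := mulT) (G := fun a b => mulT b a)) => // x y.
  by rewrite !hmul_iota; congr iota; apply: functional_extensionality => i.
have assoc a b c : mulT (mulT a b) c = mulT a (mulT b c).
  apply: (ext3 hT (F := fun a b c => mulT (mulT a b) c) (G := fun a b c => mulT a (mulT b c))).
  - by move=> a' b'; apply: hTr.
  - by move=> a' c'; apply: (lin_comp (hTl c') (hTr a')).
  - by move=> b' c'; apply: (lin_comp (hTl c') (hTl b')).
  - by move=> a' b'; apply: (lin_comp (hTr a') (hTr b')).
  - by move=> a' c'; apply: (lin_comp (hTr a') (hTl c')).
  - by move=> b' c'; apply: hTl.
  by move=> x y z; rewrite !hmul_iota; congr iota; apply: functional_extensionality => i.
have leibP x y z : brT (iota x) (brT (iota y) (iota z)) =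
    brT (brT (iota x) (iota y)) (iota z) + brT (iota y) (brT (iota x) (iota z)).
  rewrite [brT (iota y) (iota z)]hbr_iota [brT (iota x) (iota y)]hbr_iota.
  rewrite [brT (iota x) (iota z)]hbr_iota brsumR brsumL brsumR.
  set C := fun j i => iota (upd (upd z j (br (extend y (z j)))) i (br (extend x (z i)))).
  have E1 : \sum_(i < m) \sum_(j < m) iota (upd z j (br (extend (upd y i (br (extend x (y i)))) (z j))))
     = \sum_(j < m) (iota (upd z j (br (extend x (br (extend y (z j)))))) -
                    iota (upd z j (br (extend y (br (extend x (z j))))))).
    rewrite exchange_big; apply: eq_bigr => j _.
    by rewrite (FI2 hP x y (z j)) (mlD hi) addrK (ml_sum _ _ _ _ _ hi).
  have E2 : \sum_(i < m) \sum_(j < m) iota (upd (upd z i (br (extend x (z i)))) j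
                 (br (extend y (upd z i (br (extend x (z i))) j))))
     = \sum_(j < m) (iota (upd z j (br (extend y (br (extend x (z j)))))) +
                     \sum_(i < m | i != j) C j i).
    transitivity (\sum_(i < m) (iota (upd z i (br (extend y (br (extend x (z i)))))) +
       \sum_(j < m | j != i) iota (upd (upd z i (br (extend x (z i)))) j
                 (br (extend y (upd z i (br (extend x (z i))) j)))))).
      by apply: eq_bigr => i _; rewrite (bigD1 i) //= upd_upd !upd_same.
    rewrite !big_split /=; congr (_ + _).
    rewrite (exchange_big_dep xpredT) //=; apply: eq_bigr => j _.
    apply: eq_big => [i|i hij]; first by rewrite eq_sym.
    by rewrite upd_other // upd_comm // eq_sym.
  have E3 : \sum_(j < m) \sum_(i < m) iota (upd (upd z j (br (extend y (z j)))) i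
                 (br (extend x (upd z j (br (extend y (z j))) i))))
     = \sum_(j < m) (iota (upd z j (br (extend x (br (extend y (z j)))))) +
                     \sum_(i < m | i != j) C j i).
    apply: eq_bigr => j _; rewrite (bigD1 j) //= upd_upd !upd_same; congr (_ + _).
    by apply: eq_bigr => i hij; rewrite /C upd_other.
  rewrite E1 E2 E3 -big_split /=; apply: eq_bigr => j _.
  by rewrite addrA subrK.
have poisP x y z : brT (iota x) (mulT (iota y) (iota z)) =
    mulT (brT (iota x) (iota y)) (iota z) + mulT (iota y) (brT (iota x) (iota z)).
  rewrite hmul_iota !hbr_iota (lin_sum _ _ _ (hTl (iota z))) (lin_sum _ _ _ (hTr (iota y))).
  rewrite -big_split /=; apply: eq_bigr => i _; rewrite !hmul_iota.
  have u1 (v : P) : (fun k => mul (upd y i v k) (z k)) = upd (fun k => mul (y k) (z k)) i (mul v (z i)).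
    by apply: functional_extensionality => k; rewrite /upd; case: eqP => [->|].
  have u2 (v : P) : (fun k => mul (y k) (upd z i v k)) = upd (fun k => mul (y k) (z k)) i (mul (y i) v).
    by apply: functional_extensionality => k; rewrite /upd; case: eqP => [->|].
  rewrite u1 u2 (Dmul hm hP) (mlD hi) addrC (hmulC (br (extend x (y i)))). done.
have leib a b c : brT a (brT b c) = brT (brT a b) c + brT b (brT a c).
  apply: (ext3 hT (F := fun a b c => brT a (brT b c))
                 (G := fun a b c => brT (brT a b) c + brT b (brT a c))).
  - by move=> a' b'; apply: (lin_comp (hbr a') (hbr b')).
  - by move=> a' c'; apply: (lin_comp (hbr a') (hbl c')).
  - by move=> b' c'; apply: (hbl (brT b' c')).
  - by move=> a' b'; apply: (lin_add (hbr (brT a' b')) (lin_comp (hbr b') (hbr a'))).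
  - by move=> a' c'; apply: (lin_add (lin_comp (hbl c') (hbr a')) (hbl (brT a' c'))).
  - by move=> b' c'; apply: (lin_add (lin_comp (hbl c') (hbl b')) (lin_comp (hbr b') (hbl c'))).
  exact: leibP.
have pois a b c : brT a (mulT b c) = mulT (brT a b) c + mulT b (brT a c).
  apply: (ext3 hT (F := fun a b c => brT a (mulT b c))
                 (G := fun a b c => mulT (brT a b) c + mulT b (brT a c))).
  - by move=> a' b'; apply: (lin_comp (hbr a') (hTr b')).
  - by move=> a' c'; apply: (lin_comp (hbr a') (hTl c')).
  - by move=> b' c'; apply: (hbl (mulT b' c')).
  - by move=> a' b'; apply: (lin_add (hTr (brT a' b')) (lin_comp (hTr b') (hbr a'))).
  - by move=> a' c'; apply: (lin_add (lin_comp (hTl c') (hbr a')) (hTl (brT a' c'))).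
  - by move=> b' c'; apply: (lin_add (lin_comp (hTl c') (hbl b')) (lin_comp (hTr b') (hbl c'))).
  exact: poisP.
split; first exact: hmulT.
split; first exact: hbrT.
split; first exact: hJ.
split; first by move=> a b; rewrite comm subrr.
split; first by move=> a b c; rewrite assoc subrr.
split; first exact: Jgen.
split; last by move=> a b c; rewrite pois subrr.
move=> a b c; rewrite leib.
have e (X Y Z W : T) : X + Y + Z + W = (X + W) + (Y + Z).
  by rewrite -[X + W + _]addrA [W + _]addrC !addrA.
rewrite e -(linD (hbr b)); apply: Jadd; first exact: Jgen.
by have [_ [_ [? _]]] := Jid b _ (Jgen a c).
Qed.
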